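(* Let $\Sigma_1,\Sigma_2$ be alphabets with $\Sigma_1\subset\Sigma_2$. If $\varphi_1:\Sigma_1^+\to\Sigma_1^+$ is a reducible Parikh-positive morphism, then there exists a reducible Parikh-positive morphism $\varphi_2:\Sigma_2^+\to\Sigma_2^+$ such that $\varphi_2(a_i)=\varphi_1(a_i)$ for all $a_i\in\Sigma_1$ and $\varphi_2(a_j)=a_j$ for all $a_j\in\Sigma_2\setminus\Sigma_1$.
   Context: A morphism $\varphi:\Sigma^+\to\Sigma^+$ with $\Sigma=\{a_1,\dots,a_n\}$ satisfies $\varphi(uv)=\varphi(u)\varphi(v)$ (non-empty images); it is Parikh-positive if every letter of $\Sigma$ occurs in $\varphi(a_1)\cdots\varphi(a_n)$. An automorphism is an injective morphism mapping each letter to a single letter. A morphism $\varphi:\Sigma^+\to\Sigma^+$ is reducible if it equals $\psi_2\circ\psi_1$ for morphisms $\psi_1,\psi_2:\Sigma^+\to\Sigma^+$ neither of which is an automorphism. *)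

(* Defs.v *)
From mathcomp Require Import all_boot.
Set Implicit Arguments. Unset Strict Implicit. Unset Printing Implicit Defensive.

(* A morphism Sigma^+ -> Sigma^+ is determined by the images of the letters:
   f : T -> seq T with every image non-empty. *)
Section Morphisms.
Variable T : finType.

Definition is_morph (f : T -> seq T) : Prop := forall a, f a <> [::].

Definition mapply (f : T -> seq T) (w : seq T) : seq T := flatten (map f w).

Definition mcomp (g f : T -> seq T) : T -> seq T := fun a => mapply g (f a).

Definition automorphism (f : T -> seq T) : Prop :=
  is_morph f /\ (forall a, size (f a) = 1) /\
  (forall u v : seq T, u <> [::] -> v <> [::] -> mapply f u = mapply f v -> u = v).

Definition parikh_positive (f : T -> seq T) : Prop :=
  forall b : T, b \in mapply f (enum T).

Definition reducible (f : T -> seq T) : Prop :=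
  exists psi1 psi2 : T -> seq T,
    [/\ is_morph psi1, is_morph psi2, ~ automorphism psi1, ~ automorphism psi2
      & forall a, f a = mcomp psi2 psi1 a].
End Morphisms.

(* Main.v *)
Require Import Defs.
From mathcomp Require Import all_boot.

Set Implicit Arguments.
Section Ext.
Variable T : finType.
Variable A : {set T}.
Local Notation S := {x : T | x \in A}.

Definition ext (f : S -> seq S) (a : T) : seq T :=
  if insub a is Some x then map val (f x) else [:: a].

Lemma ext_val f (y : S) : ext f (val y) = map val (f y).
Proof. by rewrite /ext valK. Qed.

Lemma ext_out f a : a \notin A -> ext f a = [:: a].
Proof. by move=> Ha; rewrite /ext insubF //; apply/negbTE. Qed.

Lemma mapply_ext f w : mapply (ext f) (map val w) = map val (mapply f w).
Proof.
elim: w => [|y w IH] //=. rewrite /mapply /= map_cat -IH ext_val //.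
Qed.

Lemma ext_comp g f a : mcomp (ext g) (ext f) a = ext (mcomp g f) a.
Proof.
rewrite /mcomp; case: (@insubP _ _ S a) => [x _ <-|Ha].
  by rewrite !ext_val mapply_ext.
by rewrite !ext_out // /mapply /= cats0 ext_out.
Qed.

Lemma ext_morph f : is_morph f -> is_morph (ext f).
Proof.
move=> Hf a; rewrite /ext; case: insubP => [x _ _|_] //=.
by case E: (f x) => //; have := Hf x; rewrite E.
Qed.

Lemma ext_not_auto f : is_morph f -> ~ automorphism f -> ~ automorphism (ext f).
Proof.
move=> Hm Hna [_ [Hs Hi]]; apply: Hna; split=> //; split.
  by move=> x; have := Hs (val x); rewrite ext_val size_map.
move=> u v Hu Hv E; apply: (inj_map val_inj); apply: Hi.
- by move=> H; apply: Hu; apply/nilP; rewrite /nilp -(size_map val) H.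
- by move=> H; apply: Hv; apply/nilP; rewrite /nilp -(size_map val) H.
- by rewrite !mapply_ext E.
Qed.
End Ext.

Theorem proposition10 (Sigma2 : finType) (Sigma1 : {set Sigma2})
    (phi1 : {x : Sigma2 | x \in Sigma1} -> seq {x : Sigma2 | x \in Sigma1}) :
  is_morph phi1 -> reducible phi1 -> parikh_positive phi1 ->
  exists phi2 : Sigma2 -> seq Sigma2,
    [/\ is_morph phi2, reducible phi2, parikh_positive phi2,
        (forall (a : Sigma2) (Ha : a \in Sigma1), phi2 a = map val (phi1 (exist _ a Ha)))
      & (forall a : Sigma2, a \notin Sigma1 -> phi2 a = [:: a])].
Proof.
move=> Hm [p1 [p2 [H1 H2 N1 N2 E]]] Hp.
exists (ext phi1); split.
- exact: ext_morph.
- exists (ext p1), (ext p2); split; try exact: ext_morph; try exact: ext_not_auto.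
  move=> a; rewrite ext_comp /ext; case: insubP => // x _ _; by rewrite E.
- move=> b; case: (boolP (b \in Sigma1)) => Hb.
    have := Hp (exist _ b Hb); rewrite /mapply => /flattenP [w /mapP [c _ ->] Hbc].
    apply/flattenP; exists (ext phi1 (val c)); first by apply/mapP; exists (val c); rewrite ?mem_enum.
    by rewrite ext_val; apply/mapP; exists (exist _ b Hb).
  apply/flattenP; exists (ext phi1 b); first by apply/mapP; exists b; rewrite ?mem_enum.
  by rewrite ext_out // mem_seq1.
- move=> a Ha; exact: (ext_val phi1 (exist _ a Ha)).
- move=> a Ha; exact: ext_out.
Qed.
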